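(* Let $\Omega\subset\mathbb R^n$ be open, $v\colon\Omega\to\mathbb R^n$ a $C^1$ vector field with local flow $\phi$, let $e_1,\dots,e_r\colon\Omega\to\mathbb R$ be continuous, and $E=\bigcap_{k=1}^r\{x\in\Omega: e_k(x)\le0\}$. Suppose that for some (possibly empty) closed subsets $Z_k\subset\partial E$, $k=1,\dots,r$: (a) for each $k$, there is an open neighborhood $W_k$ of the set $\{e_k=0\}\cap\partial E\setminus Z_k$ such that $e_k|_{W_k}$ is a curvature bound function for $v$; (b) $Z_k\subset E^-\cup E^+$ for each $k$. Then $E$ is a bound set for $v$.
   Context: $\phi$ is the local dynamical system generated by $v$: $t\mapsto\phi_t(x_0)$ is the maximal solution of $\dot x=v(x)$ with $x(0)=x_0$. For $E\subset\Omega$, $E^+=\{x\in E:\ \phi_{-\epsilon_n}(x)\notin E$ for some sequence $0<\epsilon_n\to0\}$ (entrance set) and $E^-=\{x\in E:\ \phi_{\epsilon_n}(x)\notin E$ for some sequence $0<\epsilon_n\to0\}$ (exit set); $\partial E$ is the boundary of $E$ in $\Omega$. A closed set $E\subset\Omega$ is a bound set for $v$ if for every $\epsilon>0$ there is no $x\in\partial E$ with $\phi_t(x)\in E$ for all $t\in(-\epsilon,\epsilon)$. For $W\subset\Omega$ open, a $C^2$ function $e\colon W\to\mathbb R$ is a curvature bound function for $v$ if for every $x\in W$ with $e(x)=0$: $De(x)v(x)=0$ implies $v(x)^TD^2e(x)v(x)+De(x)Dv(x)v(x)>0$ ($De$ derivative, $D^2e$ Hessian, $Dv$ Jacobian). 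*)

(* Defs.v *)
From HB Require Import structures.
From mathcomp Require Import all_boot all_order all_algebra.
From mathcomp Require Import all_classical all_reals all_analysis.
Set Implicit Arguments. Unset Strict Implicit. Unset Printing Implicit Defensive.
Import Order.TTheory GRing.Theory Num.Theory.
Import numFieldNormedType.Exports.
Local Open Scope classical_set_scope.
Local Open Scope ring_scope.

Section Defs.
Variables (R : realType) (n : nat).
Notation V := 'rV[R]_n.

(* interior and boundary of E relative to the open set Om (for Om open,
   the relative interior coincides with the interior in R^n) *)
Definition closed_in (Om E : set V) : Prop :=
  E `<=` Om /\ closure E `&` Om `<=` E.

Definition boundary_in (Om E : set V) : set V :=
  (closure E `&` Om) `\` interior E.

(* f : V -> W is C^1 on the open set U: differentiable at every point of U,
   with derivative depending continuously on the point (tested on each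
   direction, which is equivalent in finite dimension). *)
Definition C1_on (W : normedModType R) (U : set V) (f : V -> W) : Prop :=
  (forall x, U x -> differentiable f x) /\
  (forall u : V, forall x, U x -> {for x, continuous (fun y => 'd f y u)}).

Definition C2_on (U : set V) (f : V -> R) : Prop :=
  C1_on U f /\ forall u : V, C1_on U (fun y => 'd f y u).

Definition curvature_bound_fun (v : V -> V) (W : set V) (e : V -> R) : Prop :=
  open W /\ C2_on W e /\
  forall x, W x -> e x = 0 -> 'd e x (v x) = 0 ->
    'd (fun y => 'd e y (v x)) x (v x) + 'd e x ('d v x (v x)) > 0.

Definition ode_solution (Om : set V) (v : V -> V) (a b : R) (gam : R -> V)
  : Prop :=
  forall t, a < t < b -> Om (gam t) /\ is_derive t 1 gam (v (gam t)).

(* flow_at Om v t x y :  phi_t(x) is defined and equals y, where phi is the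
   local flow (maximal solutions) of v on Om: the maximal solution through x
   is the union of all solutions through x, so phi_t(x) is defined iff some
   solution on an open interval containing 0 and t passes through x at time 0,
   and then phi_t(x) is its value at t (uniqueness holds since v is C^1). *)
Definition flow_at (Om : set V) (v : V -> V) (t : R) (x y : V) : Prop :=
  exists a b (gam : R -> V), [/\ a < 0 < b, a < t < b, ode_solution Om v a b gam,
    gam 0 = x & gam t = y].

Definition flow_in (Om : set V) (v : V -> V) (t : R) (x : V) (E : set V) :=
  exists y, flow_at Om v t x y /\ E y.

Definition flow_out (Om : set V) (v : V -> V) (t : R) (x : V) (E : set V) :=
  exists y, flow_at Om v t x y /\ ~ E y.

Definition entrance_set (Om : set V) (v : V -> V) (E : set V) : set V :=
  [set x | E x /\ exists eps : nat -> R, [/\ forall m, 0 < eps m,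
     eps m @[m --> \oo] --> 0 & forall m, flow_out Om v (- eps m) x E]].

Definition exit_set (Om : set V) (v : V -> V) (E : set V) : set V :=
  [set x | E x /\ exists eps : nat -> R, [/\ forall m, 0 < eps m,
     eps m @[m --> \oo] --> 0 & forall m, flow_out Om v (eps m) x E]].

Definition bound_set (Om : set V) (v : V -> V) (E : set V) : Prop :=
  closed_in Om E /\
  forall eps : R, 0 < eps -> ~ exists x, boundary_in Om E x /\
    forall t, - eps < t < eps -> flow_in Om v t x E.

End Defs.

(* Main.v *)
Require Import Defs.
From HB Require Import structures.
From mathcomp Require Import all_boot all_order all_algebra.
From mathcomp Require Import all_classical all_reals all_analysis.
From mathcomp Require Import ring lra.
Import Order.TTheory GRing.Theory Num.Theory.
Import numFieldNormedType.Exports.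
Local Open Scope classical_set_scope.
Local Open Scope ring_scope.

Section S_D.
Context {R : realType} {n : nat}.
Notation V := 'rV[R]_n.

Lemma entry_le (x : V) i j : `|x i j| <= `|x|.
Proof.
rewrite [leRHS]/Num.Def.normr/= mx_normrE.
apply: le_trans; last exact: (le_bigmax _ _ (i, j)). by [].
Qed.

Lemma norm_le_entries (x : V) K : 0 <= K -> (forall i j, `|x i j| <= K) -> `|x| <= K.
Proof.
move=> K0 H; rewrite [leLHS]/Num.Def.normr/= mx_normrE (bigmax_le _ K0)//= => -[i j] _; exact: H.
Qed.

Lemma is_derive_entry (g : R -> V) (t : R) (d : V) (i : 'I_1) (j : 'I_n) :
  is_derive t 1 g d -> is_derive t 1 (fun s => g s i j) (d i j).
Proof.
move=> [dg dv]. have := dg => /derivable_mxP /(_ i j) dij.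
apply: DeriveDef => //. rewrite -dv derive_mx // mxE //.
Qed.

Lemma MVI (g dg : R -> V) (a b K : R) : a <= b ->
  (forall x, x \in `]a, b[%R -> is_derive x 1 g (dg x)) ->
  {within `[a, b], continuous g} ->
  (forall x, x \in `]a, b[%R -> `|dg x| <= K) -> `|g b - g a| <= K * (b - a).
Proof.
move=> ab dg1 cg bnd; case: (ltgtP a b) ab => // [altb|->] _; last first.
  by rewrite subrr normr0 subrr mulr0.
have mid := mid_in_itvoo altb.
have K0 : 0 <= K by apply: le_trans (bnd _ mid).
apply: norm_le_entries; first by rewrite mulr_ge0 // subr_ge0 ltW.
move=> i j; rewrite !mxE.
have [c cab ->] : exists2 c, c \in `]a, b[%R &
   (g b i j - g a i j) = dg c i j * (b - a).
  apply: (@MVT R (fun s => g s i j) (fun s => dg s i j)) => //. by move=> x xab; apply: is_derive_entry; apply: dg1.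
  move=> x. exact: (continuous_comp (cg x) (@coord_continuous _ _ _ i j (g x))).
have ba0 : 0 <= b - a by rewrite subr_ge0 ltW.
rewrite normrM (ger0_norm ba0) ler_wpM2r //.
exact: le_trans (entry_le _ _ _) (bnd _ cab).
Qed.

Lemma chain (W : normedModType R) (g : R -> V) (f : V -> W) (s : R) (d : V) :
  is_derive s 1 g d -> differentiable f (g s) ->
  is_derive s 1 (f \o g) ('d f (g s) d).
Proof.
move=> [dg dv] df.
have dgs : differentiable g s by apply/derivable1_diffP.
have dfg : differentiable (f \o g) s by apply: differentiable_comp.
apply: DeriveDef; first by apply/derivable1_diffP.
rewrite deriveE // diff_comp //=. by rewrite -[X in 'd f (g s) X](deriveE (f:=g)) // dv.
Qed.

Lemma is_derive_line (c b : V) (s : R) :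
  is_derive s 1 (fun t : R => t *: c + b) c.
Proof.
have h1 : is_derive s 1 (fun t : R => t *: c) c.
  apply: DeriveDef; first exact: diff_derivable.
  by rewrite deriveE // diff_val scale1r.
have := is_deriveD h1 (is_derive_cst b s 1).
rewrite addr0. move=> H. exact: H.
Qed.

Lemma tri_aux (K : numDomainType) (W : normedZmodType K) (p q : W) :
  `|p - q| < 1 -> `|q| <= `|p| + 1.
Proof.
move=> h; rewrite -(subrK p q) (le_trans (ler_normD _ _)) // addrC lerD2l.
by rewrite distrC ltW.
Qed.

Lemma dbound (v : V -> V) Om y : open Om -> C1_on Om v -> Om y ->
  exists r, exists L, [/\ 0 < r, 0 <= L, (forall z, `|y - z| < r -> Om z) &
    forall z w, `|y - z| < r -> `|'d v z w| <= L * `|w|].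
Proof.
move=> oOm [dv cv] Omy.
pose C (j : 'I_n) := `|'d v y (delta_mx 0 j)| + 1.
have H : \forall z \near y, Om z /\ forall j, `|'d v z (delta_mx 0 j)| <= C j.
  have nOm : \forall z \near y, Om z by exact: (oOm _ Omy).
  have nC0 j := cvgr_dist_lt _ _ (cv (delta_mx 0 j) y Omy) 1 ltr01.
  have nC := filter_forall _ (nC0 _).
  near=> z.
  have Omz : Om z by near: z; exact: nOm.
  have Hz : forall j, `|'d v y (delta_mx 0 j) - 'd v z (delta_mx 0 j)| < 1.
    by near: z; exact: nC.
  by split => // j; rewrite /C; apply: tri_aux (Hz j).
have /nbhs_ballP [r r0 Hr] := H.
exists r, (\sum_j C j); split => //.
- by apply: sumr_ge0 => j _; rewrite /C addr_ge0.
- by move=> z yz; have /Hr[] // : ball y r z by rewrite mx_norm_ball.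
move=> z w yz; have [_ HC] : Om z /\ forall j, `|'d v z (delta_mx 0 j)| <= C j.
  by apply: Hr; rewrite mx_norm_ball.
rewrite {1}(row_sum_delta w) linear_sum /= (le_trans (ler_norm_sum _ _ _)) //.
rewrite mulr_suml; apply: ler_sum => j _.
rewrite linearZ /= normrZ mulrC ler_pM //.
exact: entry_le.
Unshelve. all: by end_near.
Qed.

Lemma idt (K : comRingType) (W : lmodType K) (y a b : W) (s : K) :
  y - (s *: (a - b) + b) = s *: (y - a) + (1 - s) *: (y - b).
Proof.
rewrite scalerBl scale1r !scalerBr opprD addrA.
rewrite [s *: y - _ + _]addrC -!addrA; congr (_ + _).
rewrite !opprB [X in _ = _ + X]addrA subrK addrC. by []. Qed.

Lemma conv_aux (W : normedModType R) (y a b : W) (r s : R) :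
  0 <= s <= 1 -> `|y - a| < r -> `|y - b| < r -> `|y - (s *: (a - b) + b)| < r.
Proof.
move=> /andP[s0 s1] ya yb.
have -> : y - (s *: (a - b) + b) = s *: (y - a) + (1 - s) *: (y - b).
  exact: idt.
apply: le_lt_trans (ler_normD _ _) _.
rewrite !normrZ (ger0_norm s0) (ger0_norm (x := 1 - s)) ?subr_ge0 //.
have := normr_ge0 (y - a); have := normr_ge0 (y - b).
set A := `|y - a|; set B := `|y - b|. move=> B0 A0.
set M := Num.max A B.
have MA : A <= M by rewrite le_max lexx.
have MB : B <= M by rewrite le_max lexx orbT.
have Mr : M < r by rewrite gt_max ya yb.
have h1 : 0 <= s * (M - A) by rewrite mulr_ge0 // subr_ge0.
have h2 : 0 <= (1 - s) * (M - B) by rewrite mulr_ge0 // subr_ge0.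
nra.
Qed.

Lemma lip (v : V -> V) Om y : open Om -> C1_on Om v -> Om y ->
  exists r, exists L, [/\ 0 < r, 0 <= L, (forall z, `|y - z| < r -> Om z) &
    forall a b, `|y - a| < r -> `|y - b| < r -> `|v a - v b| <= L * `|a - b|].
Proof.
move=> oOm C1 Omy.
have [r [L [r0 L0 Omr dbd]]] := @dbound v Om y oOm C1 Omy.
have dv := C1.1.
exists r, L; split => // a b ya yb.
pose p t := t *: (a - b) + b.
have pin (t : R) : 0 <= t <= 1 -> `|y - p t| < r by move=> h; exact: conv_aux.
have hd (t : R) : t \in `]0, 1[%R -> is_derive t 1 (v \o p) ('d v (p t) (a - b)).
  move=> tin; apply: chain; first exact: is_derive_line.
  apply: dv; apply: Omr; apply: pin.
  by move: tin; rewrite in_itv /= => /andP[/ltW -> /ltW ->].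
have hc : {within `[0, 1], continuous (v \o p)}.
  apply: continuous_in_subspaceT => t; rewrite inE /= in_itv /= => tin.
  apply: continuous_comp.
    apply: differentiable_continuous; apply/derivable1_diffP.
    by have [] := is_derive_line (a - b) b t.
  exact/differentiable_continuous/dv/Omr/pin.
have := MVI (v \o p) (fun t => 'd v (p t) (a - b)) 0 1 (L * `|a - b|) ler01 hd hc.
rewrite /p /= scale1r scale0r add0r subrK subr0 mulr1; apply.
move=> t tin; apply: dbd; apply: pin.
by move: tin; rewrite in_itv /= => /andP[/ltW -> /ltW ->].
Qed.
End S_D.

Section S_F.
Context {R : realType} {n : nat}.
Notation V := 'rV[R]_n.

Lemma cont_ball {W : normedModType R} {g : R -> W} {s0 r : R} :
  {for s0, continuous g} -> 0 < r ->
  exists2 d, 0 < d & forall u, `|s0 - u| < d -> `|g s0 - g u| < r.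
Proof.
move=> cg r0.
move/cvgr_dist_lt: cg => /(_ r r0) /nbhs_ballP [d d0 Hd]; exists d => // u su; exact: Hd.
Qed.

Lemma zero_seg (D dD : R -> V) (p q L : R) : p <= q -> 0 <= L -> (q - p) * L < 1 ->
  (forall u, p <= u <= q -> {for u, continuous D}) ->
  (forall w, w \in `]p, q[%R -> is_derive w 1 D (dD w)) ->
  (forall w, w \in `]p, q[%R -> `|dD w| <= L * `|D w|) ->
  (D p = 0 \/ D q = 0) -> forall u, p <= u <= q -> D u = 0.
Proof.
move=> pq L0 hL cD dD1 bD Dpq.
have cN : {within `[p, q], continuous (fun u => `|D u|)}.
  apply: continuous_in_subspaceT => u; rewrite inE /= in_itv /= => uin.
  apply: continuous_comp; first exact: cD.
  exact: norm_continuous.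
have [c cin cmax] := EVT_max pq cN.
have cpq : p <= c <= q by move: cin; rewrite in_itv.
set M := `|D c|.
have bM w : w \in `]p, q[%R -> `|dD w| <= L * M.
  move=> win; apply: le_trans (bD _ win) _; rewrite ler_wpM2l //.
  by apply: cmax; move: win; rewrite !in_itv /= => /andP[/ltW -> /ltW ->].
suff M0 : M = 0.
  move=> u uin; apply/normr0_eq0; apply/eqP; rewrite eq_le normr_ge0 andbT.
  by rewrite -M0; apply: cmax; rewrite in_itv.
have M0 : 0 <= M := normr_ge0 _.
have subI (x y : R) : p <= x -> y <= q -> `]x, y[ `<=` `]p, q[.
  by move=> px yq; apply: subset_itv; rewrite bnd_simp.
have contI (x y : R) : p <= x -> y <= q -> {within `[x, y], continuous D}.
  move=> px yq; apply: continuous_in_subspaceT => u; rewrite inE /= in_itv /=.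
  move=> /andP[xu uy]; apply: cD; apply/andP; split.
    exact: le_trans xu. exact: le_trans uy yq.
have fin (x : R) : 0 <= x <= q - p -> M <= L * M * x -> M = 0.
  move=> /andP[x0 xq] h; apply/eqP; rewrite eq_le M0 andbT.
  have h2 : L * M * x <= L * M * (q - p) by rewrite ler_wpM2l // mulr_ge0.
  nra.
have [pc cq] := andP cpq.
case: Dpq => [Dp|Dq].
- have := MVI D dD p c (L * M) pc.
  rewrite Dp subr0 -/M => /(_ (fun w wi => dD1 w (subI _ _ (lexx p) cq w wi))).
  move=> /(_ (contI _ _ (lexx p) cq)) /(_ (fun w wi => bM w (subI _ _ (lexx p) cq w wi))).
  by move=> h; apply: (fin (c - p)) => //; rewrite subr_ge0 pc /= lerD2r.
- have := MVI D dD c q (L * M) cq.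
  rewrite Dq sub0r normrN -/M => /(_ (fun w wi => dD1 w (subI _ _ pc (lexx q) w wi))).
  move=> /(_ (contI _ _ pc (lexx q))) /(_ (fun w wi => bM w (subI _ _ pc (lexx q) w wi))).
  by move=> h; apply: (fin (q - c)) => //; rewrite subr_ge0 cq /= lerD2l lerN2.
Qed.

Lemma sol_cont {Om} {v : V -> V} {a b g} {u : R} : ode_solution Om v a b g -> a < u < b ->
  {for u, continuous g}.
Proof.
move=> sol ui; have [_ [dg _]] := sol u ui.
exact/differentiable_continuous/derivable1_diffP.
Qed.

Lemma local2 {v : V -> V} {Om a1 b1 g1 a2 b2 g2} (s0 : R) : open Om -> C1_on Om v ->
  ode_solution Om v a1 b1 g1 -> ode_solution Om v a2 b2 g2 ->
  a1 < s0 < b1 -> a2 < s0 < b2 -> g1 s0 = g2 s0 ->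
  exists2 h, 0 < h & forall u, s0 - h <= u <= s0 + h -> g1 u = g2 u.
Proof.
move=> oOm C1 sol1 sol2 i1 i2 e12.
have [Om1 _] := sol1 s0 i1.
have [r [L [r0 L0 Omr lipb]]] := @lip _ _ v Om (g1 s0) oOm C1 Om1.
have [d1 d10 hd1] := cont_ball (sol_cont sol1 i1) r0.
have [d2 d20 hd2] := cont_ball (sol_cont sol2 i2) r0.
move: (i1) (i2) => /andP[a1s sb1] /andP[a2s sb2].
pose m := Num.min (Num.min (Num.min d1 d2) (Num.min (Num.min (s0 - a1) (b1 - s0))
   (Num.min (s0 - a2) (b2 - s0)))) (L + 1)^-1.
have m0 : 0 < m.
  by rewrite /m !lt_min d10 d20 !subr_gt0 a1s sb1 a2s sb2 invr_gt0 ltr_wpDl.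
have md1 : m <= d1 by rewrite /m !ge_min lexx.
have md2 : m <= d2 by rewrite /m !ge_min lexx !orbT.
have ma1 : m <= s0 - a1 by rewrite /m !ge_min lexx !orbT.
have mb1 : m <= b1 - s0 by rewrite /m !ge_min lexx !orbT.
have ma2 : m <= s0 - a2 by rewrite /m !ge_min lexx !orbT.
have mb2 : m <= b2 - s0 by rewrite /m !ge_min lexx !orbT.
have mL : m <= (L + 1)^-1 by rewrite /m !ge_min lexx !orbT.
have mL' : m * L < 1.
  have L1 : 0 < L + 1 by rewrite ltr_wpDl.
  apply: (le_lt_trans (y := (L + 1)^-1 * L)); first by rewrite ler_wpM2r.
  by rewrite mulrC ltr_pdivrMr // mul1r ltrDl.
pose h := m / 2.
have h0 : 0 < h by rewrite divr_gt0.
have hm : h < m by rewrite /h ltr_pdivrMr // mulr_natr mulr2n ltrDr.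
exists h => //.
have near u : s0 - h <= u <= s0 + h ->
   [/\ a1 < u < b1, a2 < u < b2, `|g1 s0 - g1 u| < r & `|g1 s0 - g2 u| < r].
  move=> /andP[hu uh].
  have su : `|s0 - u| < m by rewrite ltr_norml; apply/andP; split; lra.
  split.
  - apply/andP; split; lra.
  - apply/andP; split; lra.
  - by apply: hd1; apply: lt_le_trans md1.
  - by rewrite e12; apply: hd2; apply: lt_le_trans md2.
pose D := g1 - g2.
have cD u : s0 - h <= u <= s0 + h -> {for u, continuous D}.
  move=> /near[ui1 ui2 _ _].
  exact: (cvgB (sol_cont sol1 ui1) (sol_cont sol2 ui2)).
have dD w : s0 - h < w < s0 + h ->
    is_derive w 1 D (v (g1 w) - v (g2 w)).
  move=> /andP[hw wh]. have [ui1 ui2 _ _] := near w (ltac:(apply/andP; split; lra)).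
  exact: is_deriveB (sol1 w ui1).2 (sol2 w ui2).2.
have bD w : s0 - h < w < s0 + h -> `|v (g1 w) - v (g2 w)| <= L * `|D w|.
  move=> /andP[hw wh]. have [_ _ n1 n2] := near w (ltac:(apply/andP; split; lra)).
  exact: lipb.
have hL : h * L < 1 by apply: le_lt_trans mL'; rewrite ler_wpM2r // ltW.
move=> u /andP[hu uh]; apply/eqP; rewrite -subr_eq0; apply/eqP.
have [us|su] := leP u s0.
- have Ds : D s0 = 0 by rewrite /D !fctE e12 subrr.
  apply: (zero_seg D (fun w => v (g1 w) - v (g2 w)) (s0 - h) s0 L) _ L0 _ _ _ _ (or_intror Ds) _ _.
  + lra.
  + by rewrite opprB addrC subrK.
  + by move=> x /andP[? ?]; apply: cD; apply/andP; split; lra.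
  + by move=> x; rewrite in_itv /= => /andP[? ?]; apply: dD; apply/andP; split; lra.
  + by move=> x; rewrite in_itv /= => /andP[? ?]; apply: bD; apply/andP; split; lra.
  + by apply/andP; split.
- have Ds : D s0 = 0 by rewrite /D !fctE e12 subrr.
  apply: (zero_seg D (fun w => v (g1 w) - v (g2 w)) s0 (s0 + h) L) _ L0 _ _ _ _ (or_introl Ds) _ _.
  + lra.
  + by rewrite addrAC subrr add0r.
  + by move=> x /andP[? ?]; apply: cD; apply/andP; split; lra.
  + by move=> x; rewrite in_itv /= => /andP[? ?]; apply: dD; apply/andP; split; lra.
  + by move=> x; rewrite in_itv /= => /andP[? ?]; apply: bD; apply/andP; split; lra.
  + by apply/andP; split => //; apply: ltW.
Qed.

Lemma uniq_dir {v : V -> V} {Om a1 b1 g1 a2 b2 g2} (sg T : R) : open Om -> C1_on Om v ->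
  ode_solution Om v a1 b1 g1 -> ode_solution Om v a2 b2 g2 ->
  (sg = 1 \/ sg = -1) -> 0 < T ->
  a1 < 0 < b1 -> a2 < 0 < b2 -> a1 < sg * T < b1 -> a2 < sg * T < b2 ->
  g1 0 = g2 0 -> g1 (sg * T) = g2 (sg * T).
Proof.
move=> oOm C1 sol1 sol2 hsg T0 i01 i02 iT1 iT2 e0.
have sg1 : `|sg| = 1 by case: hsg => ->; rewrite ?normrN normr1.
have hs x y : `|sg * x - sg * y| = `|x - y| by rewrite -mulrBr normrM sg1 mul1r.
have inI u : 0 <= u <= T -> a1 < sg * u < b1 /\ a2 < sg * u < b2.
  move=> /andP[u0 uT]; move: i01 i02 => /andP[? ?] /andP[? ?].
  by case: hsg iT1 iT2 => -> /andP[? ?] /andP[? ?]; split; apply/andP; split; lra.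
pose S := [set s | 0 <= s <= T /\ forall u, 0 <= u <= s -> g1 (sg * u) = g2 (sg * u)].
have S0 : S 0.
  split; first by rewrite lexx ltW.
  move=> u /andP[u0 u0']; have -> : u = 0 by apply/eqP; rewrite eq_le u0 u0'.
  by rewrite mulr0.
have hsS : has_sup S.
  split; first by exists 0.
  by exists T => x [/andP[_ ?] _].
set s := sup S.
have s0 : 0 <= s by apply: sup_upper_bound.
have sT : s <= T by apply: ge_sup; [exists 0 | move=> x [/andP[_ ?] _]].
have clA u : 0 <= u < s -> g1 (sg * u) = g2 (sg * u).
  move=> /andP[u0 us].
  have su0 : 0 < s - u by rewrite subr_gt0.
  have [e Se ue] := sup_adherent su0 hsS.
  move: ue; rewrite opprB addrCA subrr addr0 => ue.
  by case: Se => _ /(_ u); apply; rewrite u0 ltW.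
have clB : g1 (sg * s) = g2 (sg * s).
  have [->|sp] := eqVneq s 0; first by rewrite mulr0.
  have sp' : 0 < s by rewrite lt_def sp s0.
  apply/eqP; apply/negP => /negP ne.
  have : 0 < `|(g1 - g2) (sg * s)| by rewrite normr_gt0 !fctE subr_eq0.
  move=> c0.
  have [ui1 ui2] := inI s (ltac:(apply/andP; split => //)).
  have cD : {for sg * s, continuous (g1 - g2)}.
    exact: (cvgB (sol_cont sol1 ui1) (sol_cont sol2 ui2)).
  have [d d0 hd] := cont_ball cD c0.
  pose u := Num.max 0 (s - d / 2).
  have u0 : 0 <= u by rewrite le_max lexx.
  have us : u < s by rewrite gt_max sp' /= ltrBlDr ltrDl divr_gt0.
  have su : `|s - u| < d.
    rewrite ger0_norm ?subr_ge0 ?ltW //.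
    have : s - d / 2 <= u by rewrite le_max lexx orbT.
    have : 0 < d / 2 by rewrite divr_gt0.
    have : d / 2 < d by rewrite ltr_pdivrMr // mulr_natr mulr2n ltrDr.
    move=> *; lra.
  have := hd (sg * u); rewrite hs => /(_ su).
  by rewrite !fctE (clA u) ?u0 // subrr subr0 ltxx.
have clC : s = T.
  apply/eqP; rewrite eq_le sT /= leNgt; apply/negP => sltT.
  have [ui1 ui2] := inI s (ltac:(apply/andP; split => //)).
  have [h h0 hh] := local2 (sg * s) oOm C1 sol1 sol2 ui1 ui2 clB.
  pose s' := Num.min T (s + h).
  have Ss' : S s'.
    split.
      apply/andP; split; last by rewrite ge_min lexx.
      by rewrite le_min (ltW T0) addr_ge0 // ltW.
    move=> u /andP[u0 us'].
    have [ult|sle] := ltP u s; first by apply: clA; rewrite u0.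
    apply: hh.
    have : u <= s + h by apply: le_trans us' _; rewrite ge_min lexx orbT.
    move=> ush.
    case: hsg => -> /=; rewrite ?mul1r ?mulN1r; apply/andP; split; lra.
  have : s' <= s by apply: sup_upper_bound.
  rewrite leNgt => /negP; apply; rewrite lt_min sltT /=. by rewrite ltrDl.
by have := clB; rewrite clC.
Qed.

Lemma flow_uniq (v : V -> V) Om (t : R) x y1 y2 : open Om -> C1_on Om v ->
  flow_at Om v t x y1 -> flow_at Om v t x y2 -> y1 = y2.
Proof.
move=> oOm C1 [a1 [b1 [g1 [i01 it1 sol1 g10 g1t]]]] [a2 [b2 [g2 [i02 it2 sol2 g20 g2t]]]].
rewrite -g1t -g2t.
have [t0|tn|->] := ltgtP t 0; last by rewrite g10 g20.
- have := uniq_dir (-1) (- t) oOm C1 sol1 sol2 (or_intror erefl).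
  rewrite mulN1r opprK; apply => //; first by rewrite oppr_gt0.
  by rewrite g10 g20.
- have := uniq_dir 1 t oOm C1 sol1 sol2 (or_introl erefl).
  rewrite mul1r; apply => //.
  by rewrite g10 g20.
Qed.
End S_F.

Section S_G.
Context {R : realType} {n : nat}.
Notation V := 'rV[R]_n.

Lemma phi_deriv (e : V -> R) (v : V -> V) (gam : R -> V) (x : V) :
  is_derive (0 : R) 1 gam (v x) -> gam 0 = x ->
  differentiable v x ->
  (forall u, differentiable (fun y => 'd e y u) x) ->
  is_derive (0 : R) 1 (fun t => 'd e (gam t) (v (gam t)))
     ('d (fun y => 'd e y (v x)) x (v x) + 'd e x ('d v x (v x))).
Proof.
move=> dg g0 dv dP.
pose P (j : 'I_n) (y : V) := 'd e y (delta_mx 0 j).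
pose h (j : 'I_n) := (fun t : R => v (gam t) 0 j) * (fun t => P j (gam t)).
have eqphi : (fun t => 'd e (gam t) (v (gam t))) = \sum_j h j.
  apply/funext => t; rewrite fct_sumE {1}(row_sum_delta (v (gam t))) linear_sum.
  by apply: eq_bigr => j _; rewrite linearZ.
have dvj j : is_derive (0 : R) 1 (fun t => v (gam t) 0 j) (('d v x (v x)) 0 j).
  apply: is_derive_entry; have := chain _ _ v _ _ dg; rewrite g0; apply; exact: dv.
have dPj j : is_derive (0 : R) 1 (fun t => P j (gam t)) ('d (P j) x (v x)).
  have := chain _ _ (P j) _ _ dg; rewrite g0; apply; exact: dP.
have dh j : is_derive (0 : R) 1 (h j)
    (v (gam 0) 0 j *: 'd (P j) x (v x) + P j (gam 0) *: ('d v x (v x)) 0 j).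
  exact: is_deriveM.
have Hs : is_derive (0 : R) 1 (\sum_j h j)
    (\sum_j (v (gam 0) 0 j *: 'd (P j) x (v x) + P j (gam 0) *: ('d v x (v x)) 0 j)).
  by apply: is_derive_sum.
rewrite eqphi; apply: (is_derive_eq Hs).
rewrite g0 big_split /=; congr (_ + _).
- rewrite -[X in _ = X]deriveE; last exact: dP.
  have eqQ : (fun y => 'd e y (v x)) = \sum_j (v x 0 j \*: P j).
    apply/funext => y; rewrite fct_sumE {1}(row_sum_delta (v x)) linear_sum.
    by apply: eq_bigr => j _; rewrite linearZ.
  have dQj j : derivable (v x 0 j \*: P j) x (v x).
    by apply: derivableZ; apply: diff_derivable; exact: dP.
  rewrite eqQ derive_sum //; apply: eq_bigr => j _.
  by rewrite deriveZ ?deriveE //; [exact: dP | apply: diff_derivable; exact: dP].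
- rewrite {2}(row_sum_delta ('d v x (v x))) linear_sum.
  by apply: eq_bigr => j _; rewrite linearZ /=; exact: mulrC.
Qed.
End S_G.

Section S_H.
Context {R : realType}.

Lemma real_contra (f phi : R -> R) (d c2 : R) : 0 < d -> f 0 = 0 ->
  (forall t, -d < t < d -> f t <= 0) ->
  (forall t : R, -d < t < d -> is_derive t 1 f (phi t)) ->
  is_derive (0 : R) 1 phi c2 -> (phi 0 = 0 -> 0 < c2) -> False.
Proof.
move=> d0 f0 fle df dphi hc.
have itv t : t \in `]-d, d[%R -> -d < t < d by rewrite in_itv.
have phi0 : phi 0 = 0.
  have := @derive1_at_max _ f (-d) d 0.
  have H1 : -d <= d by lra.
  have H2 : forall t, t \in `]-d, d[%R -> derivable f t 1.
    by move=> t /itv /df [].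
  have H3 : (0:R) \in `]-d, d[%R by rewrite in_itv /= oppr_lt0 d0.
  have H4 : forall t, t \in `]-d, d[%R -> f t <= f 0.
    by move=> t /itv /fle; rewrite f0.
  move=> /(_ H1 H2 H3 H4) H.
  have := df 0 (itv _ H3) => /(@derive_val _ _ _ _ _ _ _) <-.
  by rewrite (@derive_val _ _ _ _ _ _ _ H).
have c20 := hc phi0.
have [dphi1 ephi] := dphi.
have L : (fun h : R => h^-1 *: (phi (h *: 1 + 0) - phi 0)) @ 0^' --> c2.
  rewrite -ephi. exact: dphi1.
move/cvgr_gt: L => /(_ 0 c20) H.
have /nbhs_ballP[r r0 Hr] := H.
have phipos t : 0 < t < r -> 0 < phi t.
  move=> /andP[t0 tr].
  have : ball (0 : R) r t by rewrite -ball_normE /= sub0r normrN gtr0_norm.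
  move=> /Hr /(_ (lt0r_neq0 t0)).
  move=> h0; have : 0 < t^-1 * phi t by move: h0; rewrite phi0 subr0 addr0 [t%:A]mulr1.
  by rewrite pmulr_rgt0 // invr_gt0.
pose t1 := Num.min d r / 2.
have m0 : 0 < Num.min d r by rewrite lt_min d0 r0.
have t10 : 0 < t1 by rewrite divr_gt0.
have t1m : t1 < Num.min d r by rewrite /t1 ltr_pdivrMr // mulr_natr mulr2n ltrDr.
have t1d : t1 < d by apply: lt_le_trans t1m _; rewrite ge_min lexx.
have t1r : t1 < r by apply: lt_le_trans t1m _; rewrite ge_min lexx orbT.
have hd1 : forall x, x \in `]0, t1[%R -> is_derive x 1 f (phi x).
  move=> x; rewrite in_itv /= => /andP[x0 xt]; apply: df; apply/andP; split; lra.
have hc1 : {within `[0, t1], continuous f}.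
  apply: derivable_within_continuous => x; rewrite in_itv /= => /andP[x0 xt].
  have : - d < x < d by apply/andP; split; lra.
  by move=> /df [].
have [c cin] := MVT t10 hd1 hc1.
rewrite f0 subr0 => ef.
have := fle t1 (ltac:(apply/andP; split; lra)).
rewrite ef; apply/negP; rewrite -ltNge mulr_gt0 ?subr0 //.
by apply: phipos; move: cin; rewrite in_itv /= => /andP[? ?]; apply/andP; split; lra.
Qed.
End S_H.

Section S_I.
Context {R : realType} {n r : nat}.
Notation V := 'rV[R]_n.

Lemma E_closed (Om : set V) (e : 'I_r -> V -> R) :
  (forall k x, Om x -> {for x, continuous (e k)}) ->
  closed_in Om [set x | Om x /\ forall k, e k x <= 0].
Proof.
move=> econt; split; first by move=> x [].
move=> x [cx Omx]; split => // k; rewrite leNgt; apply/negP => ek.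
move/cvgr_gt: (econt k x Omx) => /(_ 0 ek) nb.
have [y [[_ Ey] ey]] := cx _ nb.
by move: (Ey k); rewrite leNgt ey.
Qed.

Lemma E_interior (Om : set V) (e : 'I_r -> V -> R) x : open Om ->
  (forall k x, Om x -> {for x, continuous (e k)}) -> Om x ->
  (forall k, e k x < 0) -> interior [set x | Om x /\ forall k, e k x <= 0] x.
Proof.
move=> oOm econt Omx ek.
have Hk k : \forall y \near x, e k y < 0.
  by move/cvgr_lt: (econt k x Omx) => /(_ 0 (ek k)).
have Hall : \forall y \near x, forall k, e k y < 0.
  exact: (@filter_forall _ _ (fun k y => e k y < 0) (nbhs x) _ Hk).
have nOm : \forall y \near x, Om y by exact: (oOm _ Omx).
rewrite /interior.
near=> y. split; first by near: y.
near: y. apply: filterS Hall => y H k; exact: ltW (H k).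
Unshelve. all: by end_near.
Qed.

Lemma small_term (ep : nat -> R) (eps : R) : 0 < eps ->
  ep m @[m --> \oo] --> 0 -> exists m, ep m < eps.
Proof.
move=> eps0 /cvgr_lt /(_ eps eps0) H.
near \oo => m. exists m. by near: m.
Unshelve. all: by end_near.
Qed.
End S_I.

Theorem corollary2p3 (R : realType) (n r : nat) (Om : set 'rV[R]_n)
  (v : 'rV[R]_n -> 'rV[R]_n) (e : 'I_r -> 'rV[R]_n -> R)
  (Z : 'I_r -> set 'rV[R]_n) :
  open Om ->
  C1_on Om v ->
  (forall k x, Om x -> {for x, continuous (e k)}) ->
  let E := [set x | Om x /\ forall k, e k x <= 0] in
  (forall k, closed_in Om (Z k) /\ Z k `<=` boundary_in Om E) ->
  (forall k, exists W : set 'rV[R]_n,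
     [/\ W `<=` Om,
         [set x | e k x = 0] `&` boundary_in Om E `\` Z k `<=` W
       & curvature_bound_fun v W (e k)]) ->
  (forall k, Z k `<=` exit_set Om v E `|` entrance_set Om v E) ->
  bound_set Om v E.
Proof.
move=> oOm C1 econt E HZ HW Hex.
have cE : closed_in Om E := E_closed Om e econt.
split => // eps eps0 [x [[[cx Omx] nint] Hfl]].
have Ex : E x by apply: cE.2; split.
have h00 : - eps < 0 < eps by rewrite oppr_lt0 eps0.
have [y0 [[a0 [b0 [gam [i0 _ sol g0 _]]]] _]] := Hfl 0 h00.
have flow_gam (t : R) : a0 < t < b0 -> flow_at Om v t x (gam t).
  by move=> it; exists a0, b0, gam; split.
have inE_gam (t : R) : - eps < t < eps -> a0 < t < b0 -> E (gam t).
  move=> h1 h2; have [y [fy Ey]] := Hfl t h1.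
  by rewrite (@flow_uniq _ _ v Om _ _ _ _ oOm C1 (flow_gam t h2) fy).
case: (pselect (exists k, Z k x)) => [[k Zkx]|nZ].
- case: (Hex k x Zkx) => [[_ [ep [ep0 epcv epout]]] | [_ [ep [ep0 epcv epout]]]].
  + have [m epm] := small_term ep eps eps0 epcv.
    have [y1 [f1 nE1]] := epout m.
    have hm : - eps < ep m < eps.
      by apply/andP; split => //; apply: lt_trans (ep0 m); rewrite oppr_lt0.
    have [y2 [f2 E2]] := Hfl (ep m) hm.
    by apply: nE1; rewrite (@flow_uniq _ _ v Om _ _ _ _ oOm C1 f1 f2).
  + have [m epm] := small_term ep eps eps0 epcv.
    have [y1 [f1 nE1]] := epout m.
    have hm : - eps < - ep m < eps.
      apply/andP; split; first by rewrite ltrN2.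
      by apply: lt_trans (eps0); rewrite oppr_lt0.
    have [y2 [f2 E2]] := Hfl (- ep m) hm.
    by apply: nE1; rewrite (@flow_uniq _ _ v Om _ _ _ _ oOm C1 f1 f2).
- have [k ek0] : exists k, e k x = 0.
    apply: contrapT => H; apply: nint.
    apply: (E_interior Om e x oOm econt Omx) => k.
    rewrite lt_neqAle (Ex.2 k) andbT; apply/eqP => ek; apply: H; by exists k.
  have [W [WOm subW [oW [C2 curv]]]] := HW k.
  have Wx : W x.
    apply: subW; split; last by move=> Zkx; apply: nZ; exists k.
    by split => //; split.
  have /nbhs_ballP [rW rW0 HrW] : nbhs x W by exact: (oW _ Wx).
  have [dg dg0 hdg] := cont_ball (sol_cont sol i0) rW0.
  move: (i0) => /andP[a00 b00].
  pose d := Num.min (Num.min eps dg) (Num.min (- a0) b0).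
  have d0 : 0 < d by rewrite /d !lt_min eps0 dg0 oppr_gt0 a00 b00.
  have de : d <= eps by rewrite /d !ge_min lexx.
  have dd : d <= dg by rewrite /d !ge_min lexx !orbT.
  have da : d <= - a0 by rewrite /d !ge_min lexx !orbT.
  have db : d <= b0 by rewrite /d !ge_min lexx !orbT.
  have inW (t : R) : - d < t < d -> W (gam t).
    move=> /andP[t1 t2]; apply: HrW.
    rewrite mx_norm_ball /ball_ /= -g0; apply: hdg.
    by rewrite sub0r normrN ltr_norml; apply/andP; split; lra.
  have inab (t : R) : - d < t < d -> a0 < t < b0.
    by move=> /andP[t1 t2]; apply/andP; split; lra.
  apply: (real_contra (fun t => e k (gam t)) (fun t => 'd (e k) (gam t) (v (gam t))) d
    ('d (fun y => 'd (e k) y (v x)) x (v x) + 'd (e k) x ('d v x (v x))) d0).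
  + by rewrite /= g0.
  + move=> t ht.
    have he : - eps < t < eps by move: ht => /andP[? ?]; apply/andP; split; lra.
    by have [_] := inE_gam t he (inab t ht); apply.
  + move=> t ht; have [_ dgt] := sol t (inab t ht).
    apply: (chain _ _ (e k) _ _ dgt); exact: C2.1.1 _ (inW t ht).
  + have [_ dg00] := sol 0 i0; rewrite g0 in dg00.
    apply: phi_deriv => //; first exact: C1.1.
    by move=> u; exact: ((C2.2 u).1 x Wx).
  + move=> /= phi0; apply: curv => //; by rewrite -g0.
Qed.
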